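(* Let $(p_k)_{k\in\mathbb{Z}}$ with $p_k\in(0,1)$, $q_k=1-p_k$, and let $X=(X_n)_{n\ge0}$ be the nearest-neighbour random walk on $\mathbb{Z}$ started at $X_0=0$ which jumps from $k$ to $k+1$ with probability $p_k$ and from $k$ to $k-1$ with probability $q_k$. Let $\Theta=\inf\{n>0: X_n=0\}$ and, on $\{\Theta<\infty\}$, let $X^\Theta=(X_n:0\le n\le\Theta)$. (i) For every positive excursion $x$, the probability $\mathbb{P}(X^\Theta=x\mid X^\Theta\in\mathcal{X}^+)$ depends only on the level numbers $N(x)$; i.e. if $x,x'\in\mathcal{X}^+$ satisfy $N(x)=N(x')$, then $\mathbb{P}(X^\Theta=x\mid X^\Theta\in\mathcal{X}^+)=\mathbb{P}(X^\Theta=x'\mid X^\Theta\in\mathcal{X}^+)$. (ii) Conversely, assume that there is no finite nonempty set $K\subset\{1,2,\dots\}$ and integers $a_h\in\mathbb{Z}\setminus\{0\}$, $h\in K$, with $\sum_{h\in K}a_h\log(p_hq_{h+1})=0$. Then for $x,x'\in\mathcal{X}^+$, $\mathbb{P}(X^\Theta=x\mid X^\Theta\in\mathcal{X}^+)=\mathbb{P}(X^\Theta=x'\mid X^\Theta\in\mathcal{X}^+)$ implies $N(x)=N(x')$.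
   Context: A positive excursion is a finite sequence $x=(x_n:0\le n\le\theta)$ of integers with $x_0=x_\theta=0$, $x_n>0$ for $0<n<\theta$, and jumps $y_n=x_{n+1}-x_n\in\{1,-1\}$ for $0\le n<\theta$; $\theta=\theta(x)$ is its length. $\mathcal{X}^+$ denotes the set of all positive excursions. For $x\in\mathcal{X}^+$, its level numbers are the sequence $N(x)=(N_h(x):h\ge0)$, where $N_h(x)=|\{n\in[0,\theta):y_n=1,\ x_n=h\}|$ (the number of up-steps starting from level $h$, i.e. the number of ''individuals born at level $h$''). The event $\{X^\Theta\in\mathcal{X}^+\}$ is the event that $\Theta<\infty$ and $X_1=1$; it has positive probability. *)

(* Defs.v *)
From Stdlib Require Import Reals ZArith List Arith ClassicalEpsilon.
From Coquelicot Require Import Coquelicot.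
Import ListNotations.
Open Scope R_scope.

(* A finite path x = (x_0, ..., x_theta) is represented as a list of integers;
   its length theta is (length x - 1). *)
Definition xn (x : list Z) (n : nat) : Z := nth n x 0%Z.
Definition theta (x : list Z) : nat := (length x - 1)%nat.
Definition jump (x : list Z) (n : nat) : Z := (xn x (S n) - xn x n)%Z.

(* Positive excursion: x_0 = x_theta = 0, x_n > 0 for 0 < n < theta,
   jumps in {1,-1}; theta >= 1 (as for X^Theta, Theta > 0). *)
Definition is_pexc (x : list Z) : Prop :=
  x <> nil /\ (0 < theta x)%nat /\
  xn x 0 = 0%Z /\ xn x (theta x) = 0%Z /\
  (forall n, (0 < n < theta x)%nat -> (0 < xn x n)%Z) /\
  (forall n, (n < theta x)%nat -> jump x n = 1%Z \/ jump x n = (-1)%Z).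

Definition level_num (x : list Z) (h : nat) : nat :=
  length (filter (fun n => (Z.eqb (jump x n) 1 && Z.eqb (xn x n) (Z.of_nat h))%bool)
                 (seq 0 (theta x))).

Definition step_prob (p : Z -> R) (k y : Z) : R :=
  if Z.eqb y 1 then p k else 1 - p k.

(* P(X_0 = x_0, ..., X_theta = x_theta) for the walk started at 0
   (x_0 = 0): product of the transition probabilities.  For a positive
   excursion x this is exactly P(X^Theta = x). *)
Definition path_prob (p : Z -> R) (x : list Z) : R :=
  fold_right Rmult 1 (map (fun n => step_prob p (xn x n) (jump x n)) (seq 0 (theta x))).

Fixpoint all_steps (m : nat) : list (list bool) :=
  match m with
  | O => [nil]
  | S m' => map (cons true) (all_steps m') ++ map (cons false) (all_steps m')
  end.
Fixpoint path_from (k : Z) (s : list bool) : list Z :=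
  match s with
  | nil => [k]
  | b :: s' => k :: path_from (if b then (k + 1)%Z else (k - 1)%Z) s'
  end.

(* P(X^Theta in X^+, Theta = m) *)
Definition pexc_mass_len (p : Z -> R) (m : nat) : R :=
  fold_right Rplus 0
    (map (fun s => if excluded_middle_informative (is_pexc (path_from 0 s))
                   then path_prob p (path_from 0 s) else 0) (all_steps m)).

Definition pexc_mass (p : Z -> R) : R := Series (pexc_mass_len p).

Definition cond_prob (p : Z -> R) (x : list Z) : R := path_prob p x / pexc_mass p.

Definition no_log_relation (p : Z -> R) : Prop :=
  forall (K : list nat) (a : nat -> Z),
    K <> nil -> NoDup K ->
    (forall h, In h K -> (1 <= h)%nat /\ a h <> 0%Z) ->
    fold_right Rplus 0
      (map (fun h => IZR (a h) * ln (p (Z.of_nat h) * (1 - p (Z.of_nat h + 1)%Z))) K) <> 0.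

(* Main.v *)
Require Import Defs.
From Stdlib Require Import Reals ZArith List Lia Lra ClassicalEpsilon.
From Coquelicot Require Import Coquelicot.
Import ListNotations.
Open Scope R_scope.

Fixpoint W (p : Z -> R) (k : Z) (s : list bool) : R :=
  match s with
  | nil => 1
  | b :: s' => step_prob p k (if b then 1%Z else (-1)%Z) *
               W p (if b then (k + 1)%Z else (k - 1)%Z) s'
  end.

Lemma len_pf k s : length (path_from k s) = S (length s).
Proof. revert k; induction s; intros k; simpl; auto. Qed.

Lemma theta_pf k s : theta (path_from k s) = length s.
Proof. unfold theta; rewrite len_pf; lia. Qed.

Lemma xn_pf0 k s : xn (path_from k s) 0 = k.
Proof. destruct s; reflexivity. Qed.

Lemma path_prob_from p k s : path_prob p (path_from k s) = W p k s.
Proof.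
  revert k; induction s as [|b s IH]; intros k.
  - reflexivity.
  - unfold path_prob. rewrite theta_pf. simpl length.
    cbn [seq map fold_right].
    rewrite <- seq_shift, map_map.
    specialize (IH (if b then (k + 1)%Z else (k - 1)%Z)).
    unfold path_prob in IH; rewrite theta_pf in IH.
    simpl W. rewrite <- IH. f_equal.
    + assert (E : jump (path_from k (b :: s)) 0 = if b then 1%Z else (-1)%Z).
      { unfold jump. change (xn (path_from k (b :: s)) 1) with
          (xn (path_from (if b then (k + 1)%Z else (k - 1)%Z) s) 0).
        rewrite xn_pf0. change (xn (path_from k (b :: s)) 0) with k.
        destruct b; lia. }
      rewrite E. reflexivity.
Qed.
Definition fsum (l : list R) : R := fold_right Rplus 0 l.

Lemma fsum_app l1 l2 : fsum (l1 ++ l2) = fsum l1 + fsum l2.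
Proof. induction l1; simpl; [ring|]. unfold fsum in *; simpl; rewrite IHl1; ring. Qed.

Lemma fsum_scal {A} c (f : A -> R) l :
  fsum (map (fun x => c * f x) l) = c * fsum (map f l).
Proof. induction l; unfold fsum in *; simpl; [ring|]. rewrite IHl; ring. Qed.

Lemma fsum_plus {A} (f g : A -> R) l :
  fsum (map (fun x => f x + g x) l) = fsum (map f l) + fsum (map g l).
Proof. induction l; unfold fsum in *; simpl; [ring|]. rewrite IHl; ring. Qed.

Lemma fsum_ext_in {A} (f g : A -> R) l :
  (forall x, In x l -> f x = g x) -> fsum (map f l) = fsum (map g l).
Proof. intros H; f_equal; apply map_ext_in; auto. Qed.

Lemma fsum_zero {A} (f : A -> R) l :
  (forall x, In x l -> f x = 0) -> fsum (map f l) = 0.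
Proof. induction l; intros H; unfold fsum in *; simpl; [ring|].
  rewrite IHl; [rewrite H; simpl; auto; ring|]. intros; apply H; simpl; auto. Qed.

Lemma fsum_nonneg {A} (f : A -> R) l :
  (forall x, 0 <= f x) -> 0 <= fsum (map f l).
Proof. induction l; intros H; unfold fsum in *; simpl; [lra|].
  specialize (IHl H). specialize (H a). lra. Qed.

Lemma fsum_ge_in {A} (f : A -> R) l x :
  (forall x, 0 <= f x) -> In x l -> f x <= fsum (map f l).
Proof. induction l; intros H Hin; [destruct Hin|]. unfold fsum in *; simpl.
  destruct Hin as [<-|Hin].
  - pose proof (fsum_nonneg f l H). unfold fsum in *. lra.
  - specialize (IHl H Hin). specialize (H a). lra. Qed.

Definition T (p : Z -> R) (A : list bool -> Prop) (k : Z) (m : nat) : R :=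
  fsum (map (fun s => if excluded_middle_informative (A s) then W p k s else 0)
            (all_steps m)).

Lemma T_S p A k m :
  T p A k (S m) = p k * T p (fun s => A (true :: s)) (k + 1)%Z m
                + (1 - p k) * T p (fun s => A (false :: s)) (k - 1)%Z m.
Proof.
  unfold T. simpl all_steps. rewrite map_app, fsum_app, !map_map.
  rewrite <- !fsum_scal. f_equal; f_equal; apply map_ext; intros s;
  destruct excluded_middle_informative; simpl; unfold step_prob; simpl; ring.
Qed.

Lemma T_empty p A k m : (forall s, ~ A s) -> T p A k m = 0.
Proof. intros H. unfold T. apply fsum_zero. intros s _.
  destruct excluded_middle_informative; [exfalso; eapply H; eauto|auto]. Qed.

Lemma W_pos p (hp : forall k : Z, 0 < p k < 1) k s : 0 < W p k s.
Proof. revert k; induction s; intros k; simpl; [lra|].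
  apply Rmult_lt_0_compat; auto. unfold step_prob.
  destruct (Z.eqb _ _); specialize (hp k); lra. Qed.

Lemma T_nonneg p (hp : forall k : Z, 0 < p k < 1) A k m : 0 <= T p A k m.
Proof. unfold T. apply fsum_nonneg. intros s. destruct excluded_middle_informative;
  [left; apply W_pos; auto|lra]. Qed.

Definition prefix_free (A : list bool -> Prop) : Prop :=
  forall s t, A s -> A (s ++ t) -> t = nil.

Lemma T_bound p (hp : forall k : Z, 0 < p k < 1) M : forall A k,
  prefix_free A -> fsum (map (T p A k) (seq 0 (S M))) <= 1.
Proof.
  induction M as [|M IH]; intros A k HA.
  - unfold fsum; simpl. unfold T; simpl. unfold fsum; simpl.
    destruct excluded_middle_informative; lra.
  - change (seq 0 (S (S M))) with (0%nat :: seq 1 (S M)).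
    rewrite <- seq_shift. unfold fsum at 1. cbn [map fold_right].
    rewrite map_map.
    fold (fsum (map (fun x => T p A k (S x)) (seq 0 (S M)))).
    erewrite fsum_ext_in by (intros; apply T_S).
    rewrite fsum_plus, fsum_scal, fsum_scal.
    assert (Hpt : prefix_free (fun s => A (true :: s))).
    { intros s t H1 H2. apply (HA (true :: s) t); auto. }
    assert (Hpf : prefix_free (fun s => A (false :: s))).
    { intros s t H1 H2. apply (HA (false :: s) t); auto. }
    pose proof (IH _ (k + 1)%Z Hpt) as I1.
    pose proof (IH _ (k - 1)%Z Hpf) as I2.
    pose proof (hp k) as Hk.
    assert (T0 : T p A k 0 = if excluded_middle_informative (A nil) then 1 else 0)
      by (unfold T, fsum; simpl; destruct excluded_middle_informative; simpl; ring).
    rewrite T0.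
    destruct excluded_middle_informative as [HN|HN].
    + assert (E1 : forall M', fsum (map (T p (fun s => A (true :: s)) (k+1)%Z) M') = 0).
      { intros; apply fsum_zero; intros; apply T_empty; intros s Hs.
        specialize (HA nil (true :: s) HN Hs); discriminate. }
      assert (E2 : forall M', fsum (map (T p (fun s => A (false :: s)) (k-1)%Z) M') = 0).
      { intros; apply fsum_zero; intros; apply T_empty; intros s Hs.
        specialize (HA nil (false :: s) HN Hs); discriminate. }
      rewrite E1, E2. lra.
    + assert (0 <= fsum (map (T p (fun s => A (true :: s)) (k+1)%Z) (seq 0 (S M))))
        by (apply fsum_nonneg; intros; apply T_nonneg; auto).
      assert (0 <= fsum (map (T p (fun s => A (false :: s)) (k-1)%Z) (seq 0 (S M))))
        by (apply fsum_nonneg; intros; apply T_nonneg; auto).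
      nra.
Qed.

Lemma xn_pf_app k s t n : (n <= length s)%nat ->
  xn (path_from k (s ++ t)) n = xn (path_from k s) n.
Proof.
  revert k n; induction s as [|b s IH]; intros k n Hn.
  - simpl in Hn. assert (n = 0%nat) by lia. subst. simpl. rewrite xn_pf0. reflexivity.
  - destruct n as [|n]; [reflexivity|]. simpl in Hn.
    change (xn (path_from (if b then (k + 1)%Z else (k - 1)%Z) (s ++ t)) n =
            xn (path_from (if b then (k + 1)%Z else (k - 1)%Z) s) n).
    apply IH; lia.
Qed.

Lemma pexc_prefix_free : prefix_free (fun s => is_pexc (path_from 0 s)).
Proof.
  intros s t H1 H2. destruct t as [|c t]; auto. exfalso.
  destruct H1 as [_ [Ht1 [_ [Hend1 _]]]].
  destruct H2 as [_ [Ht2 [_ [_ [Hpos2 _]]]]].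
  rewrite theta_pf in Ht1, Hend1, Ht2, Hpos2.
  rewrite length_app in Ht2, Hpos2. simpl in Ht2, Hpos2.
  specialize (Hpos2 (length s)). rewrite xn_pf_app in Hpos2 by lia.
  rewrite Hend1 in Hpos2. specialize (Hpos2 ltac:(lia)). lia.
Qed.

Lemma pexc_mass_len_T p m :
  pexc_mass_len p m = T p (fun s => is_pexc (path_from 0 s)) 0 m.
Proof.
  unfold pexc_mass_len, T, fsum. f_equal. apply map_ext. intros s.
  destruct excluded_middle_informative; auto. apply path_prob_from.
Qed.

Lemma sum_n_fsum (a : nat -> R) M : sum_n a M = fsum (map a (seq 0 (S M))).
Proof.
  induction M.
  - rewrite sum_O. unfold fsum; simpl; ring.
  - rewrite sum_Sn, IHM. rewrite (seq_S (S M)), map_app, fsum_app.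
    unfold fsum at 3; simpl. change plus with Rplus. ring.
Qed.

Lemma in_all_steps s : In s (all_steps (length s)).
Proof.
  induction s as [|b s IH]; simpl; auto.
  apply in_or_app. destruct b; [left|right]; apply in_map; auto.
Qed.

Lemma reconstruct x : x <> nil ->
  (forall n, (n < theta x)%nat -> jump x n = 1%Z \/ jump x n = (-1)%Z) ->
  path_from (xn x 0) (map (fun n => Z.eqb (jump x n) 1) (seq 0 (theta x))) = x.
Proof.
  induction x as [|a l IH]; intros Hne Hj; [congruence|].
  destruct l as [|b l'].
  - reflexivity.
  - assert (Eth : theta (a :: b :: l') = S (theta (b :: l'))) by (unfold theta; simpl; lia).
    rewrite Eth. cbn [seq map]. rewrite <- seq_shift, map_map.
    cbn [path_from].
    assert (Hj0 := Hj 0%nat ltac:(rewrite Eth; lia)).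
    assert (E : (if Z.eqb (jump (a :: b :: l') 0) 1 then (xn (a :: b :: l') 0 + 1)%Z
                 else (xn (a :: b :: l') 0 - 1)%Z) = xn (b :: l') 0).
    { unfold jump, xn in *; simpl in *.
      destruct (Z.eqb_spec (b - a) 1); lia. }
    change (xn (a :: b :: l') 0) with a at 1. rewrite E.
    f_equal. apply IH; [congruence|].
    intros n Hn. apply (Hj (S n)). rewrite Eth; lia.
Qed.

Lemma step_prob_pos p (hp : forall k : Z, 0 < p k < 1) k y : 0 < step_prob p k y.
Proof. unfold step_prob. destruct (Z.eqb y 1); specialize (hp k); lra. Qed.

Lemma fold_mult_pos (l : list R) : (forall r, In r l -> 0 < r) -> 0 < fold_right Rmult 1 l.
Proof. induction l; intros H; simpl; [lra|]. apply Rmult_lt_0_compat; auto.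
  apply H; simpl; auto. apply IHl; intros; apply H; simpl; auto. Qed.

Lemma path_prob_pos p (hp : forall k : Z, 0 < p k < 1) x : 0 < path_prob p x.
Proof. unfold path_prob. apply fold_mult_pos. intros r Hr.
  apply in_map_iff in Hr. destruct Hr as [n [<- _]]. apply step_prob_pos; auto. Qed.

Lemma mass_pos p (hp : forall k : Z, 0 < p k < 1) x : is_pexc x -> 0 < pexc_mass p.
Proof.
  intros Hx.
  set (a := pexc_mass_len p).
  assert (Ha : forall n, 0 <= a n).
  { intros n; unfold a; rewrite pexc_mass_len_T; apply T_nonneg; auto. }
  assert (Hinc : forall n, sum_n a n <= sum_n a (S n)).
  { intros n; rewrite sum_Sn; change plus with Rplus; specialize (Ha (S n)); lra. }
  assert (Hb : forall n, sum_n a n <= 1).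
  { intros n; rewrite sum_n_fsum. unfold a.
    erewrite fsum_ext_in by (intros; apply pexc_mass_len_T).
    apply T_bound; auto. apply pexc_prefix_free. }
  assert (Hfin := ex_finite_lim_seq_incr _ _ Hinc Hb).
  assert (Hlim := Lim_seq_correct' _ Hfin).
  assert (Hle := is_lim_seq_incr_compare _ _ Hlim Hinc (theta x)).
  unfold pexc_mass, Series. fold a.
  eapply Rlt_le_trans; [|apply Hle].
  rewrite sum_n_fsum.
  eapply Rlt_le_trans; [|apply (fsum_ge_in a _ (theta x) Ha)];
    [|apply in_seq; lia].
  unfold a. rewrite pexc_mass_len_T.
  destruct Hx as (Hne & Ht & H0 & Hend & Hpos & Hj).
  set (s0 := map (fun n => Z.eqb (jump x n) 1) (seq 0 (theta x))).
  assert (Hrec : path_from 0 s0 = x) by (rewrite <- H0; apply reconstruct; auto).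
  assert (Hlen : length s0 = theta x) by (unfold s0; rewrite length_map, length_seq; auto).
  unfold T.
  eapply Rlt_le_trans; [|apply (fsum_ge_in _ _ s0)].
  - cbv beta. destruct excluded_middle_informative as [_|n].
    + rewrite <- path_prob_from, Hrec. apply path_prob_pos; auto.
    + exfalso; apply n; rewrite Hrec; repeat split; auto.
  - intros s; destruct excluded_middle_informative; [left; apply W_pos; auto|lra].
  - rewrite <- Hlen. apply in_all_steps.
Qed.

Lemma indicator (a : nat -> R) H z : (0 <= z < Z.of_nat H)%Z ->
  fsum (map (fun h => if Z.eqb z (Z.of_nat h) then a h else 0) (seq 0 H)) = a (Z.to_nat z).
Proof.
  induction H as [|H IH]; intros Hz; [lia|].
  rewrite seq_S, map_app, fsum_app. unfold fsum at 2; simpl.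
  destruct (Z.eqb_spec z (Z.of_nat H)) as [E|E].
  - rewrite fsum_zero.
    + rewrite E, Nat2Z.id. ring.
    + intros h Hh. apply in_seq in Hh. destruct (Z.eqb_spec z (Z.of_nat h)); [lia|auto].
  - rewrite IH by lia. ring.
Qed.

Lemma count_general (J : nat -> bool) (X : nat -> Z) (a : nat -> R) H l :
  (forall n, In n l -> J n = true -> (0 <= X n < Z.of_nat H)%Z) ->
  fsum (map (fun n => if J n then a (Z.to_nat (X n)) else 0) l) =
  fsum (map (fun h => INR (length (filter (fun n => (J n && Z.eqb (X n) (Z.of_nat h))%bool) l)) * a h)
            (seq 0 H)).
Proof.
  induction l as [|n l IH]; intros Hl.
  - simpl. rewrite fsum_zero; [unfold fsum; simpl; auto|]. intros; simpl; ring.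
  - erewrite (fsum_ext_in (fun h => INR (length (filter _ (n :: l))) * a h)).
    2:{ intros h _. simpl filter.
        instantiate (1 := fun h => (if (J n && Z.eqb (X n) (Z.of_nat h))%bool then a h else 0)
                    + INR (length (filter (fun n => (J n && Z.eqb (X n) (Z.of_nat h))%bool) l)) * a h).
        cbv beta. destruct (J n && Z.eqb (X n) (Z.of_nat h))%bool; simpl length;
        [rewrite S_INR|]; ring. }
    rewrite fsum_plus. rewrite <- IH by (intros; apply Hl; simpl; auto).
    unfold fsum at 1; simpl map; simpl fold_right. fold (fsum (map (fun n0 => if J n0 then a (Z.to_nat (X n0)) else 0) l)).
    f_equal. destruct (J n) eqn:EJ.
    + simpl. rewrite indicator; auto. apply Hl; simpl; auto.
    + simpl. rewrite fsum_zero; auto.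
Qed.

Lemma ln_fold (l : list R) : (forall r, In r l -> 0 < r) ->
  ln (fold_right Rmult 1 l) = fsum (map ln l).
Proof.
  induction l as [|r l IH]; intros H; simpl.
  - unfold fsum; simpl; apply ln_1.
  - rewrite ln_mult. rewrite IH. reflexivity.
    + intros; apply H; simpl; auto.
    + apply H; simpl; auto.
    + apply fold_mult_pos. intros; apply H; simpl; auto.
Qed.

Lemma telescope (f : nat -> R) N :
  fsum (map (fun n => f n - f (S n)) (seq 0 N)) = f 0%nat - f N.
Proof.
  induction N; [unfold fsum; simpl; ring|].
  rewrite seq_S, map_app, fsum_app, IHN. unfold fsum; simpl. ring.
Qed.

Fixpoint psi (p : Z -> R) (m : nat) : R :=
  match m with O => 0 | S m' => psi p m' + ln (1 - p (Z.of_nat (S m'))) end.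

Lemma psi_S p m : psi p (S m) = psi p m + ln (1 - p (Z.of_nat (S m))).
Proof. reflexivity. Qed.

Definition lr (p : Z -> R) (h : nat) : R := ln (p (Z.of_nat h) * (1 - p (Z.of_nat h + 1)%Z)).

Lemma pexc_nonneg x : is_pexc x -> forall n, (n <= theta x)%nat -> (0 <= xn x n)%Z.
Proof.
  intros (_ & _ & H0 & Hend & Hpos & _) n Hn.
  destruct (Nat.eq_dec n 0); [subst; lia|].
  destruct (Nat.eq_dec n (theta x)); [subst; lia|].
  specialize (Hpos n ltac:(lia)); lia.
Qed.

Lemma pexc_le x : is_pexc x -> forall n, (n <= theta x)%nat -> (xn x n <= Z.of_nat n)%Z.
Proof.
  intros Hx. destruct Hx as (_ & _ & H0 & _ & _ & Hj).
  induction n; intros Hn; [lia|].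
  specialize (Hj n ltac:(lia)). unfold jump in Hj. specialize (IHn ltac:(lia)). lia.
Qed.

Lemma lemmaA p (hp : forall k : Z, 0 < p k < 1) x H : is_pexc x -> (theta x <= H)%nat ->
  ln (path_prob p x) = fsum (map (fun h => INR (level_num x h) * lr p h) (seq 0 H)).
Proof.
  intros Hx HH.
  pose proof (pexc_nonneg x Hx) as Hnn.
  pose proof (pexc_le x Hx) as Hle.
  pose proof Hx as (_ & Ht & H0 & Hend & Hpos & Hj).
  unfold path_prob. rewrite ln_fold.
  2:{ intros r Hr. apply in_map_iff in Hr. destruct Hr as [n [<- _]]. apply step_prob_pos; auto. }
  rewrite map_map.
  set (f := fun n => psi p (Z.to_nat (xn x n))).
  erewrite fsum_ext_in.
  2:{ intros n Hn. apply in_seq in Hn.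
      instantiate (1 := fun n => (if Z.eqb (jump x n) 1 then lr p (Z.to_nat (xn x n)) else 0)
                                 + (f n - f (S n))).
      cbv beta. unfold f.
      assert (A0 := Hnn n ltac:(lia)). assert (A1 := Hnn (S n) ltac:(lia)).
      destruct (Hj n ltac:(lia)) as [E|E]; rewrite E; unfold jump in E; simpl Z.eqb;
        cbv iota; unfold step_prob; simpl Z.eqb; cbv iota.
      - assert (Em : Z.to_nat (xn x (S n)) = S (Z.to_nat (xn x n))) by lia.
        rewrite Em, psi_S. unfold lr.
        rewrite Z2Nat.id by lia.
        replace (Z.of_nat (S (Z.to_nat (xn x n)))) with (xn x n + 1)%Z by lia.
        assert (hh := hp (xn x n)). assert (hh' := hp (xn x n + 1)%Z).
        rewrite ln_mult by lra. ring.
      - assert (Em : Z.to_nat (xn x n) = S (Z.to_nat (xn x (S n)))) by lia.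
        rewrite Em, psi_S.
        replace (Z.of_nat (S (Z.to_nat (xn x (S n))))) with (xn x n) by lia. ring. }
  rewrite fsum_plus, telescope.
  unfold f. rewrite H0, Hend. simpl psi.
  rewrite Rminus_diag, Rplus_0_r.
  unfold level_num.
  apply (count_general (fun n => Z.eqb (jump x n) 1) (fun n => xn x n) (lr p) H).
  intros n Hn _. apply in_seq in Hn. split; [apply Hnn; lia|].
  assert (Hl := Hle n ltac:(lia)). lia.
Qed.

Lemma fsum_minus {A} (f g : A -> R) l :
  fsum (map (fun x => f x - g x) l) = fsum (map f l) - fsum (map g l).
Proof. induction l; unfold fsum in *; simpl; [ring|]. rewrite IHl; ring. Qed.

Lemma fsum_filter {A} (f : A -> R) (P : A -> bool) l :
  (forall x, P x = false -> f x = 0) -> fsum (map f (filter P l)) = fsum (map f l).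
Proof. intros H; induction l; simpl; auto. destruct (P a) eqn:E; unfold fsum in *; simpl.
  - rewrite IHl; auto. - rewrite IHl, H; auto; ring. Qed.

Lemma filter_nil {A} (f : A -> bool) l : (forall n, In n l -> f n = false) -> filter f l = nil.
Proof. induction l; intros H; simpl; auto. rewrite H by (simpl; auto). apply IHl.
  intros; apply H; simpl; auto. Qed.

Lemma level0 x : is_pexc x -> level_num x 0 = 1%nat.
Proof.
  intros Hx. pose proof Hx as (_ & Ht & H0 & Hend & Hpos & Hj).
  assert (Hj0 : jump x 0 = 1%Z).
  { destruct (Hj 0%nat Ht) as [E|E]; auto. exfalso. unfold jump in E.
    destruct (Nat.eq_dec (theta x) 1) as [E1|E1].
    - rewrite E1 in Hend. lia.
    - specialize (Hpos 1%nat ltac:(lia)). lia. }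
  unfold level_num. destruct (theta x) as [|t] eqn:Et; [lia|].
  change (seq 0 (S t)) with (0%nat :: seq 1 t). simpl filter.
  rewrite Hj0, H0. simpl. rewrite filter_nil; auto.
  intros n Hn. apply in_seq in Hn. specialize (Hpos n ltac:(lia)).
  destruct (Z.eqb_spec (xn x n) 0); [lia|]. apply Bool.andb_false_r.
Qed.

Lemma level_big x h : is_pexc x -> (theta x <= h)%nat -> level_num x h = 0%nat.
Proof.
  intros Hx Hh. unfold level_num. rewrite filter_nil; auto.
  intros n Hn. apply in_seq in Hn. assert (Hl := pexc_le x Hx n ltac:(lia)).
  destruct (Z.eqb_spec (xn x n) (Z.of_nat h)); [lia|]. apply Bool.andb_false_r.
Qed.

Theorem proposition1 (p : Z -> R) (hp : forall k : Z, 0 < p k < 1) :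
  (forall x x' : list Z, is_pexc x -> is_pexc x' ->
     (forall h : nat, level_num x h = level_num x' h) ->
     cond_prob p x = cond_prob p x') /\
  (no_log_relation p ->
   forall x x' : list Z, is_pexc x -> is_pexc x' ->
     cond_prob p x = cond_prob p x' ->
     forall h : nat, level_num x h = level_num x' h).
Proof.
  split.
  - intros x x' Hx Hx' HN. unfold cond_prob. f_equal.
    rewrite <- (exp_ln _ (path_prob_pos p hp x)), <- (exp_ln _ (path_prob_pos p hp x')).
    f_equal.
    rewrite (lemmaA p hp x (max (theta x) (theta x'))) by (auto; lia).
    rewrite (lemmaA p hp x' (max (theta x) (theta x'))) by (auto; lia).
    apply fsum_ext_in. intros h _. rewrite HN. reflexivity.
  - intros Hnl x x' Hx Hx' Hc.
    assert (Hm := mass_pos p hp x Hx).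
    assert (Hpp : path_prob p x = path_prob p x').
    { unfold cond_prob, Rdiv in Hc. apply Rmult_eq_reg_r in Hc; auto.
      apply Rinv_neq_0_compat; lra. }
    set (m := max (theta x) (theta x')).
    assert (L1 := lemmaA p hp x (S m) Hx ltac:(lia)).
    assert (L2 := lemmaA p hp x' (S m) Hx' ltac:(lia)).
    rewrite <- Hpp, L1 in L2. clear L1.
    assert (Split : forall F, fsum (map F (seq 0 (S m))) = F 0%nat + fsum (map F (seq 1 m)))
      by reflexivity.
    rewrite !Split, (level0 x Hx), (level0 x' Hx') in L2.
    set (a := fun h => (Z.of_nat (level_num x h) - Z.of_nat (level_num x' h))%Z).
    assert (Hdiff : fsum (map (fun h => IZR (a h) * ln (p (Z.of_nat h) * (1 - p (Z.of_nat h + 1)%Z)))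
                              (seq 1 m)) = 0).
    { rewrite (fsum_ext_in _ (fun h => INR (level_num x h) * lr p h - INR (level_num x' h) * lr p h)).
      2:{ intros h _. unfold a. rewrite minus_IZR, <- !INR_IZR_INZ.
          unfold lr. ring. }
      rewrite fsum_minus. lra. }
    set (K := filter (fun h => negb (Nat.eqb (level_num x h) (level_num x' h))) (seq 1 m)).
    assert (HK : K = nil).
    { destruct K as [|k K'] eqn:EK; auto. exfalso.
      apply (Hnl (k :: K') a); [discriminate| | |].
      - rewrite <- EK. apply NoDup_filter, seq_NoDup.
      - intros h Hh. rewrite <- EK in Hh. unfold K in Hh. apply filter_In in Hh.
        destruct Hh as [Hh1 Hh2]. apply in_seq in Hh1. split; [lia|].
        unfold a. destruct (Nat.eqb_spec (level_num x h) (level_num x' h)); [discriminate|lia].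
      - rewrite <- EK. unfold K. change (fold_right Rplus 0) with fsum.
        rewrite fsum_filter; [exact Hdiff|].
        intros h Hh. unfold a. destruct (Nat.eqb_spec (level_num x h) (level_num x' h));
          [|discriminate]. rewrite e, Z.sub_diag. simpl. ring. }
    intros h.
    destruct (Nat.eq_dec h 0) as [->|Hh0]; [rewrite !level0; auto|].
    destruct (le_lt_dec h m) as [Hhm|Hhm].
    + destruct (Nat.eq_dec (level_num x h) (level_num x' h)) as [E|E]; auto.
      exfalso. assert (Hin : In h K).
      { unfold K. apply filter_In. split; [apply in_seq; lia|].
        destruct (Nat.eqb_spec (level_num x h) (level_num x' h)); [contradiction|auto]. }
      rewrite HK in Hin. destruct Hin.
    + rewrite !level_big; auto; lia.
Qed.
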